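(* Let $m,n,P$ be positive integers with $P \ge mn+n-1$, let $N_1,N_0$ be positive integers with $m \mid N_1$ and $n \mid N_0$, and let $\bm{W} \in \mathbb{R}^{N_1 \times N_0}$ and $\bm{x} \in \mathbb{R}^{N_0}$. Consider the Generalized PolyDot scheme for computing $\bm{s}=\bm{W}\bm{x}$ with $P$ nodes defined in the context. Then the recovery threshold of this scheme is $mn+n-1$: from the computed outputs $\widetilde{\bm{s}}_p$ of any $mn+n-1$ of the $P$ nodes, the whole product $\bm{s}=\bm{W}\bm{x}$ can be recovered. Consequently, the scheme tolerates up to $P-mn-n+1$ erasures (nodes whose outputs are missing).
   Context: Block-partition $\bm{W}$ into an $m\times n$ grid of blocks $\bm{W}_{i,j}\in\mathbb{R}^{(N_1/m)\times(N_0/n)}$ ($i=0,\dots,m-1$, $j=0,\dots,n-1$), and partition $\bm{x}$ into $n$ consecutive sub-vectors $\bm{x}_j \in \mathbb{R}^{N_0/n}$; correspondingly $\bm{s}=\bm{W}\bm{x}$ splits into $m$ sub-vectors $\bm{s}_i=\sum_{j}\bm{W}_{i,j}\bm{x}_j$. Define the polynomials $\widetilde{\bm{W}}(u,v)=\sum_{i=0}^{m-1}\sum_{j=0}^{n-1}\bm{W}_{i,j}u^i v^j$ and $\widetilde{\bm{x}}(v)=\sum_{j=0}^{n-1}\bm{x}_j v^{n-1-j}$. Choose $P$ distinct real numbers $b_0,\dots,b_{P-1}$ and set $a_p=b_p^{\,n}$. Node $p$ ($p=0,\dots,P-1$) stores only $\widetilde{\bm{W}}(a_p,b_p)$ (an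 $\frac{N_1}{m}\times\frac{N_0}{n}$ matrix) and $\widetilde{\bm{x}}(b_p)$ (an $\frac{N_0}{n}$-vector) and computes $\widetilde{\bm{s}}_p=\widetilde{\bm{W}}(a_p,b_p)\widetilde{\bm{x}}(b_p)$. The recovery threshold is the number of node outputs, out of $P$, that a decoder needs (from any subset of nodes of that size) to recover $\bm{s}$. *)

(* Defs.v *)
From mathcomp Require Import all_boot all_order all_algebra.
Set Implicit Arguments. Unset Strict Implicit. Unset Printing Implicit Defensive.
Import Order.TTheory GRing.Theory Num.Theory.
Local Open Scope ring_scope.

Section PolyDot.
Variable R : ringType.

(* Entry of a matrix accessed by natural-number indices (0 when out of range;
   under the divisibility hypotheses all indices used below are in range). *)
Definition matE (N1 N0 : nat) (A : 'M[R]_(N1, N0)) (i j : nat) : R :=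
  match @insub _ (fun k => k < N1)%N 'I_N1 i, @insub _ (fun k => k < N0)%N 'I_N0 j with
  | Some i', Some j' => A i' j'
  | _, _ => 0
  end.

Definition vecE (N0 : nat) (v : 'cV[R]_N0) (j : nat) : R :=
  match @insub _ (fun k => k < N0)%N 'I_N0 j with
  | Some j' => v j' 0
  | None => 0
  end.

Definition Wblock (m n N1 N0 : nat) (W : 'M[R]_(N1, N0)) (i j r c : nat) : R :=
  matE W (i * (N1 %/ m) + r)%N (j * (N0 %/ n) + c)%N.

Definition xblock (n N0 : nat) (x : 'cV[R]_N0) (j c : nat) : R :=
  vecE x (j * (N0 %/ n) + c)%N.

Definition Wtilde (m n N1 N0 : nat) (W : 'M[R]_(N1, N0)) (u v : R)
  : 'M[R]_(N1 %/ m, N0 %/ n) :=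
  \matrix_(r, c) \sum_(i < m) \sum_(j < n) Wblock m n W i j r c * u ^+ i * v ^+ j.

Definition xtilde (n N0 : nat) (x : 'cV[R]_N0) (v : R) : 'cV[R]_(N0 %/ n) :=
  \col_c \sum_(j < n) xblock n x j c * v ^+ (n - 1 - j).

Definition node_out (m n N1 N0 : nat) (W : 'M[R]_(N1, N0)) (x : 'cV[R]_N0)
  (bp : R) : 'cV[R]_(N1 %/ m) :=
  Wtilde m n W (bp ^+ n) bp *m xtilde n x bp.

End PolyDot.

(* Main.v *)
Require Import Defs.
From mathcomp Require Import all_boot all_order all_algebra.
From mathcomp Require Import zify ring.
From Stdlib Require Import ClassicalEpsilon.
Import Order.TTheory GRing.Theory Num.Theory.
Set Implicit Arguments. Unset Strict Implicit. Unset Printing Implicit Defensive.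
Local Open Scope ring_scope.

Section Proof.
Variable R : idomainType.
Variables m n N1 N0 : nat.

Definition Pol (W : 'M[R]_(N1,N0)) (x : 'cV[R]_N0) (r : nat) : {poly R} :=
  \sum_(i < m) \sum_(j < n) \sum_(k < n) \sum_(c < N0 %/ n)
     (Wblock m n W i j r c * xblock n x k c) *: 'X^(n*i + j + (n-1-k)).

Lemma hornerPol W x r t : (Pol W x r).[t] =
  \sum_(i < m) \sum_(j < n) \sum_(k < n) \sum_(c < N0 %/ n)
     (Wblock m n W i j r c * xblock n x k c) * t ^+ (n*i + j + (n-1-k)).
Proof.
rewrite /Pol horner_sum; apply eq_bigr => i _; rewrite horner_sum; apply eq_bigr => j _.
rewrite horner_sum; apply eq_bigr => k _; rewrite horner_sum; apply eq_bigr => c _.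
by rewrite hornerZ hornerXn.
Qed.

Lemma node_outE W x t (r : 'I_(N1 %/ m)) : node_out m n W x t r 0 = (Pol W x r).[t].
Proof.
rewrite hornerPol /node_out !mxE.
under eq_bigr => c _ do rewrite !mxE big_distrl /=.
rewrite exchange_big /=; apply eq_bigr => i _.
under eq_bigr => c _ do rewrite big_distrl /=.
rewrite exchange_big /=; apply eq_bigr => j _.
under eq_bigr => c _ do rewrite big_distrr /=.
rewrite exchange_big /=; apply eq_bigr => k _.
apply eq_bigr => c _.
rewrite !exprD exprM; ring.
Qed.

Lemma coefPol W x r d : (Pol W x r)`_d =
  \sum_(i < m) \sum_(j < n) \sum_(k < n) \sum_(c < N0 %/ n)
     (Wblock m n W i j r c * xblock n x k c) * ((n*i + j + (n-1-k))%N == d)%:R.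
Proof.
rewrite /Pol coef_sum; apply eq_bigr => i _; rewrite coef_sum; apply eq_bigr => j _.
rewrite coef_sum; apply eq_bigr => k _; rewrite coef_sum; apply eq_bigr => c _.
by rewrite coefZ coefXn eq_sym.
Qed.

Lemma idx_lt (i j k : nat) : (i < m)%N -> (j < n)%N -> (k < n)%N ->
  (n*i + j + (n-1-k) < m*n + n - 1)%N.
Proof.
move=> hi hj hk; have h := leq_mul (leqnn n) hi; rewrite mulnS (mulnC n m) in h; lia.
Qed.

Lemma sizePol W x r : (size (Pol W x r) <= m*n + n - 1)%N.
Proof.
apply/leq_sizeP => d hd; rewrite coefPol.
apply: big1 => i _; apply: big1 => j _; apply: big1 => k _; apply: big1 => c _.
have h := @idx_lt i j k (ltn_ord i) (ltn_ord j) (ltn_ord k).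
rewrite (_ : (_ == d) = false) ?mulr0 //; apply/negbTE; lia.
Qed.

Lemma coefPol_mid W x r i0 : (i0 < m)%N -> (Pol W x r)`_(n*i0 + (n-1)) =
  \sum_(j < n) \sum_(c < N0 %/ n) Wblock m n W i0 j r c * xblock n x j c.
Proof.
move=> hi0; rewrite coefPol (bigD1 (Ordinal hi0)) //= [X in _ + X]big1 ?addr0; last first.
  move=> i /eqP hne; apply: big1 => j _; apply: big1 => k _; apply: big1 => c _.
  have hj := ltn_ord j; have hk := ltn_ord k.
  rewrite (_ : (_ == _) = false) ?mulr0 //; apply/negbTE.
  have : ((i : nat) != i0) by apply/eqP => e; apply: hne; apply: val_inj.
  case: (ltngtP i i0) => // h _.
  - have h2 := leq_mul (leqnn n) h; rewrite mulnS in h2; lia.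
  - have h2 := leq_mul (leqnn n) h; rewrite mulnS in h2; lia.
apply eq_bigr => j _; rewrite (bigD1 j) //= [X in _ + X]big1 ?addr0; last first.
  move=> k hkj; apply: big1 => c _.
  have hj := ltn_ord j; have hk := ltn_ord k.
  rewrite (_ : (_ == _) = false) ?mulr0 //; apply/negbTE.
  have : ((k : nat) != j) by [].
  lia.
apply eq_bigr => c _.
have hj := ltn_ord j.
by rewrite (_ : (_ == _) = true) ?mulr1 //; apply/eqP; lia.
Qed.

Lemma sum_split (F : nat -> R) q : forall nn,
  \sum_(0 <= k < nn * q) F k = \sum_(j < nn) \sum_(c < q) F (j * q + c)%N.
Proof.
elim => [|nn IH]; first by rewrite mul0n big_geq // big_ord0.
rewrite big_ord_recr /= -IH mulSn addnC (big_cat_nat (n := nn * q)) //=; last by rewrite leq_addr.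
congr (_ + _).
have -> : \sum_(nn*q <= i < nn*q+q) F i = \sum_(0 + nn*q <= i < nn*q+q) F i by rewrite add0n.
rewrite big_addn addKn big_mkord; apply eq_bigr => c _.
by rewrite addnC.
Qed.

Lemma matE_ord (A : 'M[R]_(N1, N0)) (i : 'I_N1) (j : 'I_N0) : matE A i j = A i j.
Proof. by rewrite /matE !valK. Qed.

Lemma vecE_ord (v : 'cV[R]_N0) (j : 'I_N0) : vecE v j = v j 0.
Proof. by rewrite /vecE valK. Qed.

Lemma mul_entry (hn : (0 < n)%N) (d0 : (n %| N0)%N) (W : 'M[R]_(N1,N0)) x (R0 : 'I_N1) :
  (W *m x) R0 0 = \sum_(j < n) \sum_(c < N0 %/ n)
     matE W R0 (j * (N0 %/ n) + c)%N * vecE x (j * (N0 %/ n) + c)%N.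
Proof.
rewrite mxE.
under eq_bigr => k _ do rewrite -matE_ord -vecE_ord.
rewrite -(big_mkord predT (fun k => matE W R0 k * vecE x k)).
rewrite -(sum_split (fun k => matE W R0 k * vecE x k)).
by rewrite mulnC divnK.
Qed.

End Proof.


Theorem theorem1 (R : realFieldType) (m n P N1 N0 : nat)
  (hm : (0 < m)%N) (hn : (0 < n)%N) (hP : (m * n + n - 1 <= P)%N)
  (hN1 : (0 < N1)%N) (hN0 : (0 < N0)%N)
  (d1 : (m %| N1)%N) (d0 : (n %| N0)%N)
  (b : 'I_P -> R) (hb : injective b)
  (S : {set 'I_P}) (hS : (m * n + n - 1 <= #|S|)%N) :
  exists dec : ('I_P -> 'cV[R]_(N1 %/ m)) -> 'cV[R]_N1,
    forall (W : 'M[R]_(N1, N0)) (x : 'cV[R]_N0),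
      dec (fun p => if p \in S then node_out m n W x (b p) else 0) = W *m x.
Proof.
pose F := fun (W : 'M[R]_(N1, N0)) (x : 'cV[R]_N0) =>
  (fun p => if p \in S then node_out m n W x (b p) else 0).
have uniq_pol : forall W x W' x', F W x = F W' x' ->
    forall r : 'I_(N1 %/ m), Pol m n W x r = Pol m n W' x' r.
  move=> W x W' x' hF r; apply/eqP; rewrite -subr_eq0; apply/negPn/negP => hne.
  have := max_poly_roots hne (rs := [seq b p | p <- enum S]).
  rewrite map_inj_uniq // enum_uniq size_map -cardE => /(_ _ isT).
  have hsz : (size (Pol m n W x r - Pol m n W' x' r)%R <= m * n + n - 1)%N.
    apply: leq_trans (size_polyD _ _) _; rewrite size_polyN geq_max !sizePol //.
  move=> H; have : (#|S| < m * n + n - 1)%N.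
    apply: leq_trans hsz; apply: H; apply/allP => t /mapP [p]; rewrite mem_enum => pS ->.
    have := congr1 (fun f => f p) hF; rewrite /F /= pS => e.
    by rewrite /root hornerD hornerN -!(node_outE n) e subrr.
  by rewrite ltnNge hS.
have q1pos : (0 < N1 %/ m)%N by rewrite divn_gt0 // dvdn_leq.
have key : forall W x W' x', F W x = F W' x' -> W *m x = W' *m x'.
  move=> W x W' x' hF; apply/matrixP => R0 c0; rewrite (ord1 c0).
  rewrite !(mul_entry hn d0).
  have hr : (R0 %% (N1 %/ m) < N1 %/ m)%N by rewrite ltn_pmod.
  have hi : (R0 %/ (N1 %/ m) < m)%N.
    by rewrite ltn_divLR // mulnC divnK.
  have eR := divn_eq R0 (N1 %/ m).
  have hp := uniq_pol _ _ _ _ hF (Ordinal hr).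
  have := congr1 (fun p : {poly R} => p`_(n * (R0 %/ (N1 %/ m)) + (n-1))) hp.
  rewrite /= !(coefPol_mid n) // /Wblock -eR.
  done.
pose dec := fun g : 'I_P -> 'cV[R]_(N1 %/ m) =>
  let wx := epsilon (inhabits ((0 : 'M[R]_(N1,N0)), (0 : 'cV[R]_N0)))
                    (fun wx => F wx.1 wx.2 = g) in wx.1 *m wx.2.
exists dec => W x.
rewrite /dec /=.
set wx := epsilon _ _.
have hs : F wx.1 wx.2 = F W x.
  exact: (epsilon_spec _ (fun wx => F wx.1 wx.2 = F W x) (ex_intro _ (W, x) erefl)).
exact: key.
Qed.
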